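(* Let $q=2v+1$ be a prime power with $v$ odd, and suppose there exists an $(\mathbb F_q^\Box,\{k_1,\dots,k_n\})$ Heffter difference packing $\{B_1,\dots,B_n\}$. Then there exists a Heffter space over $\mathbb F_q$ with point set $\mathbb F_q^\Box$ and with $k_1+\dots+k_n$ parallel classes, exactly $k_i$ of which consist of blocks of size $k_i$ for each $i$ (counting with multiplicity over equal values of $k_i$), i.e. a $(v,\{k_1^{k_1},\dots,k_n^{k_n}\})$ Heffter space. Moreover, if each $B_i$ admits an ordering whose partial sums are pairwise distinct, then the Heffter space can be taken so that each of its blocks admits an ordering whose partial sums are pairwise distinct.
   Context: $\mathbb F_q^\Box$ denotes the multiplicative group of nonzero squares of $\mathbb F_q$; for $q\equiv3\pmod4$ it is a half-set of the additive group of $\mathbb F_q$, i.e. it contains exactly one of $g,-g$ for each $g\ne0$. Fix a group isomorphism $\phi:\mathbb F_q^\Box\to\mathbb Z_v$. A family $\{B_1,\dots,B_n\}$ of subsets of $\mathbb F_q^\Box$ with $|B_i|=k_i$ is an $(\mathbb F_q^\Box,\{k_1,\dots,k_n\})$ Heffter difference packing if: (H1) the multiset of all differences $a-b$ with $(a,b)$ an ordered pair of distinct elements of a common $\phi(B_i)$, taken over all $i$, has no repeated element in $\mathbb Z_v$; (H2) for each $i$, $k_i$ divides $v$ and the elements of $\phi(B_i)$ are pairwise distinct modulo $k_i$; (H3) each $B_i$ has sum $0$ in $\mathbb F_q$. A $(v,k)$ Heffter system on a half-set $V$ of an abelian group of order $2v+1$ is a partition of $V$ into blocks of size $k$ each summing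 to $0$. A Heffter space over $G$ is a partial linear space (any two distinct points in at most one block) on a half-set $V$ of $G$ with a resolution of its blocks into parallel classes (partitions of $V$), each of which is a Heffter system on $V$. *)

(* Defs.v *)
From mathcomp Require Import all_boot all_order all_algebra all_field.
Set Implicit Arguments. Unset Strict Implicit. Unset Printing Implicit Defensive.
Import GRing.Theory.
Local Open Scope ring_scope.

Section Heffter.
Variable F : finFieldType.

Definition nzsquares : {set F} :=
  [set x : F | (x != 0) && [exists y : F, y ^+ 2 == x]].

Definition is_halfset (V : {set F}) : Prop :=
  0 \notin V /\ forall g : F, g != 0 -> ((g \in V) (+) (- g \in V)).

(* phi : F_q^Box -> Z_v is a group isomorphism; Z_v is modelled as
   {0,...,v-1} with addition modulo v. *)
Definition sq_iso (v : nat) (phi : F -> nat) : Prop :=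
  [/\ (forall x, x \in nzsquares -> (phi x < v)%N),
      (forall x y, x \in nzsquares -> y \in nzsquares ->
          phi (x * y) = ((phi x + phi y) %% v)%N),
      {in nzsquares &, injective phi} &
      (forall r, (r < v)%N -> exists2 x, x \in nzsquares & phi x = r)].

Definition zdiff (v a b : nat) : nat := ((a + (v - b)) %% v)%N.

Definition heffter_diff_packing (v : nat) (phi : F -> nat) (n : nat)
    (B : 'I_n -> {set F}) : Prop :=
  [/\ (forall i, B i \subset nzsquares),
      (forall i j a b c d, a \in B i -> b \in B i -> a != b ->
          c \in B j -> d \in B j -> c != d ->
          zdiff v (phi a) (phi b) = zdiff v (phi c) (phi d) ->
          [/\ i = j, a = c & b = d]),
      (forall i, (#|B i| %| v)%N /\
          {in B i &, forall a b, (phi a %% #|B i| = phi b %% #|B i|)%N -> a = b}) &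
      (forall i, \sum_(x in B i) x = 0)].

Definition heffter_system (V : {set F}) (k : nat) (P : {set {set F}}) : Prop :=
  [/\ partition P V,
      (forall b, b \in P -> #|b| = k) &
      (forall b, b \in P -> \sum_(x in b) x = 0)].

(* Blocks of distinct
   classes are distinct (resolution), and two distinct points lie in at most
   one block (partial linear space). *)
Definition heffter_space (V : {set F}) (m : nat)
    (P : 'I_m -> {set {set F}}) (K : 'I_m -> nat) : Prop :=
  [/\ is_halfset V,
      (forall c, heffter_system V (K c) (P c)) &
      (forall c1 c2 b1 b2 x y, b1 \in P c1 -> b2 \in P c2 ->
          x != y -> x \in b1 -> y \in b1 -> x \in b2 -> y \in b2 ->
          c1 = c2 /\ b1 = b2)].

Definition has_distinct_partial_sums (A : {set F}) : Prop :=
  exists s : seq F, perm_eq s (enum A) /\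
    uniq [seq \sum_(x <- take j s) x | j <- iota 1 (size s)].

End Heffter.

(* Main.v *)
Require Import Defs.
From mathcomp Require Import all_boot all_order all_algebra all_field zify ring.
Set Implicit Arguments. Unset Strict Implicit. Unset Printing Implicit Defensive.
Import GRing.Theory.
Local Open Scope ring_scope.


Lemma S_neq0 (F : finFieldType) (x : F) : x \in nzsquares F -> x != 0.
Proof. by rewrite inE => /andP[]. Qed.

Lemma S_mul (F : finFieldType) (x y : F) :
  x \in nzsquares F -> y \in nzsquares F -> x * y \in nzsquares F.
Proof.
rewrite !inE => /andP[x0 /existsP[a /eqP ha]] /andP[y0 /existsP[b /eqP hb]].
rewrite mulf_neq0 //=; apply/existsP; exists (a * b).
by rewrite exprMn ha hb.
Qed.

Lemma S_inv (F : finFieldType) (x : F) : x \in nzsquares F -> x^-1 \in nzsquares F.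
Proof.
rewrite !inE => /andP[x0 /existsP[a /eqP ha]].
rewrite invr_eq0 x0 /=; apply/existsP; exists a^-1.
by rewrite exprVn ha.
Qed.

Lemma S_1 (F : finFieldType) : 1 \in nzsquares F.
Proof. rewrite inE oner_eq0 /=; apply/existsP; exists 1; by rewrite expr1n. Qed.

Lemma modd2 (p v : nat) : (p < v)%N -> ((p + p) %% v = if (p + p < v)%N then p + p else p + p - v)%N.
Proof.
move=> pv; case: ifP => h; first by rewrite modn_small.
have -> : (p + p = (p + p - v) + v)%N by lia.
by rewrite modnDr modn_small; lia.
Qed.

Definition psi (F : finFieldType) (v : nat) (phi : F -> nat) (r : nat) : F :=
  odflt 0 [pick x in nzsquares F | phi x == (r %% v)%N].

Lemma psiP (F : finFieldType) (v : nat) (phi : F -> nat) r :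
  (0 < v)%N -> sq_iso v phi ->
  psi v phi r \in nzsquares F /\ phi (psi v phi r) = (r %% v)%N.
Proof.
move=> v0 [h1 h2 h3 h4]; rewrite /psi; case: pickP => [x /andP[xS /eqP]|none] //=.
have [x xS hx] := h4 _ (ltn_pmod r v0).
by move: (none x); rewrite xS hx eqxx.
Qed.

Lemma phi1 (F : finFieldType) (v : nat) (phi : F -> nat) :
  sq_iso v phi -> phi 1 = 0%N.
Proof.
move=> [h1 h2 h3 h4]; have := h2 _ _ (S_1 F) (S_1 F); rewrite mulr1.
have := h1 _ (S_1 F); move: (phi 1) => p pv; rewrite modd2 //; case: ifP; lia.
Qed.

Lemma two_neq0 (F : finFieldType) (v : nat) : #|F| = (2 * v + 1)%N -> odd v ->
  (1 : F) != -1.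
Proof.
move=> hq hv; apply/negP => /eqP h.
have h2 : (2 \in [pchar F])%N.
  by rewrite inE /=; apply/eqP; rewrite mulr2n {2}h addrN.
have := card_pprimeChar h2. move=> /= hc.
have : odd #|F| by rewrite hq addn1 /= oddM /= ?negbK.
rewrite hc oddX orbF => /eqP h0; rewrite h0 expn0 in hc.
change (#|F| = 1%N) in hc; rewrite hq in hc; move: hv; lia.
Qed.

Lemma v_gt0 v : odd v -> (0 < v)%N.
Proof. by case: v. Qed.

Lemma m1_notin (F : finFieldType) v (phi : F -> nat) :
  #|F| = (2 * v + 1)%N -> odd v -> sq_iso v phi -> -1 \notin nzsquares F.
Proof.
move=> hq hv hphi; apply/negP => hm.
have [h1 h2 h3 h4] := hphi.
have := h2 _ _ hm hm; rewrite mulrNN mulr1 (phi1 hphi).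
have pv := h1 _ hm; have hp : phi (-1) = phi (-1) by [].
move: pv; set p := phi (-1) => pv.
rewrite modd2 //; case: ifP => hl e.
- have : phi (-1) = phi 1 by rewrite (phi1 hphi) -/p; lia.
  move/(h3 _ _ hm (S_1 F)) => e1.
  by have := two_neq0 hq hv; rewrite e1 eqxx.
- have ev : v = (p + p)%N by lia.
  by move: hv; rewrite ev addnn odd_double.
Qed.

Lemma cardS (F : finFieldType) v (phi : F -> nat) :
  odd v -> sq_iso v phi -> #|nzsquares F| = v.
Proof.
move=> hv hphi; have v0 := v_gt0 hv; have [h1 h2 h3 h4] := hphi.
have -> : nzsquares F = [set psi v phi (val r) | r : 'I_v].
  apply/setP => x; apply/idP/imsetP; last by move=> [r _ ->]; case: (psiP (val r) v0 hphi).
  move=> xS.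
  exists (Ordinal (h1 _ xS)) => //=.
  have [pS pe] := psiP (phi x) v0 hphi.
  by apply: h3 => //; rewrite pe modn_small //; exact: h1.
rewrite card_imset ?card_ord // => r1 r2 e.
apply: val_inj; have [_ e1] := psiP (val r1) v0 hphi; have [_ e2] := psiP (val r2) v0 hphi.
by rewrite e e2 !modn_small // in e1; exact: ltn_ord.
Qed.

Lemma halfset (F : finFieldType) v (phi : F -> nat) :
  #|F| = (2 * v + 1)%N -> odd v -> sq_iso v phi -> is_halfset (nzsquares F).
Proof.
move=> hq hv hphi.
have m1 := m1_notin hq hv hphi.
set NS := [set - x | x in nzsquares F].
have cNS : #|NS| = v by rewrite card_imset; [exact: cardS hv hphi | exact: oppr_inj].
have dis : nzsquares F :&: NS = set0.
  apply/setP => x; rewrite in_setI in_set0; apply/negP => /andP[xS /imsetP[y yS ey]].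
  apply: (negP m1); have -> : -1 = x * y^-1.
    by rewrite ey mulNr mulfV // S_neq0.
  by apply: S_mul => //; exact: S_inv.
have cov : nzsquares F :|: NS = [set~ 0].
  apply/eqP; rewrite eqEcard; apply/andP; split.
    apply/subsetP => x; rewrite in_setU => /orP[/S_neq0 xn|/imsetP[y /S_neq0 yn ->]];
      by rewrite in_setC1 ?oppr_eq0.
  rewrite cardsU dis cards0 cNS (cardS hv hphi) cardsC1 hq; lia.
split; first by rewrite inE eqxx.
move=> g g0.
have : g \in nzsquares F :|: NS by rewrite cov in_setC1.
rewrite in_setU => /orP[gS|/imsetP[y yS ->]].
  rewrite gS /=; apply/negP => ngS.
  have : -g \in nzsquares F :&: NS by rewrite in_setI ngS; apply/imsetP; exists g.
  by rewrite dis in_set0.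
rewrite opprK yS addbT; apply/negP => ngS.
have : -y \in nzsquares F :&: NS by rewrite in_setI ngS; apply/imsetP; exists y.
by rewrite dis in_set0.
Qed.

Definition blk (F : finFieldType) (A : {set F}) (g : F) : {set F} :=
  [set x * g | x in A].

Lemma blk_card (F : finFieldType) (A : {set F}) g : g != 0 -> #|blk A g| = #|A|.
Proof. by move=> g0; rewrite card_imset //; exact: mulIf. Qed.

Lemma blk_sum (F : finFieldType) (A : {set F}) g :
  \sum_(x in A) x = 0 -> \sum_(x in blk A g) x = 0.
Proof.
move=> h; case: (eqVneq g 0) => [->|g0].
  rewrite big1 // => x /imsetP[y _ ->]; by rewrite mulr0.
rewrite big_imset /=; last by move=> x y _ _; exact: mulIf.
by rewrite -mulr_suml h mul0r.
Qed.

Lemma blk_sub (F : finFieldType) (A : {set F}) g :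
  A \subset nzsquares F -> g \in nzsquares F -> blk A g \subset nzsquares F.
Proof.
move=> /subsetP hA gS; apply/subsetP => x /imsetP[y yA ->].
by apply: S_mul => //; apply: hA.
Qed.

Lemma blk_partial (F : finFieldType) (A : {set F}) g :
  g != 0 -> has_distinct_partial_sums A -> has_distinct_partial_sums (blk A g).
Proof.
move=> g0 [s [ps us]]; exists [seq x * g | x <- s]; split.
  apply: uniq_perm.
  - rewrite map_inj_uniq; last exact: mulIf.
    by rewrite (perm_uniq ps) enum_uniq.
  - exact: enum_uniq.
  move=> x; rewrite mem_enum; apply/mapP/imsetP => -[y].
    by rewrite (perm_mem ps) mem_enum => yA ->; exists y.
  by move=> yA ->; exists y; rewrite ?(perm_mem ps) ?mem_enum.
rewrite size_map.
have -> : [seq \sum_(x <- take j [seq x0 * g | x0 <- s]) x | j <- iota 1 (size s)] =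
          [seq y * g | y <- [seq \sum_(x <- take j s) x | j <- iota 1 (size s)]].
  rewrite -map_comp; apply: eq_map => j /=.
  by rewrite -map_take big_map mulr_suml.
by rewrite map_inj_uniq //; exact: mulIf.
Qed.

Definition cls (F : finFieldType) (phi : F -> nat) (A : {set F}) (j : nat) : {set {set F}} :=
  [set blk A g | g in [set g in nzsquares F | (phi g %% #|A|)%N == j]].

Lemma cls_system (F : finFieldType) v (phi : F -> nat) (A : {set F}) (j : nat) :
  odd v -> sq_iso v phi -> A \subset nzsquares F -> (#|A| %| v)%N ->
  {in A &, forall a b, (phi a %% #|A| = phi b %% #|A|)%N -> a = b} ->
  \sum_(x in A) x = 0 -> (j < #|A|)%N ->
  heffter_system (nzsquares F) #|A| (cls phi A j).
Proof.
move=> hv hphi hsub hk hinj hsum jk.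
have v0 := v_gt0 hv; have [h1 h2 h3 h4] := hphi.
have k0 : (0 < #|A|)%N by case: #|A| hk jk.
have kv : (#|A| <= v)%N by apply: dvdn_leq.
set k := #|A| in hk hinj jk k0 kv *.
split.
- apply/and3P; split.
  + apply/eqP/setP => x; apply/bigcupP/idP.
      move=> [b /imsetP[g]]; rewrite inE => /andP[gS _] -> xb.
      by apply: (subsetP (blk_sub hsub gS)).
    move=> xS.
    pose f (a : F) : 'I_k := Ordinal (ltn_pmod (phi a) k0).
    have fsurj : f @: A = setT.
      apply/eqP; rewrite eqEcard subsetT cardsT card_ord card_in_imset ?leqnn //.
      move=> a b aA bA /(congr1 val) /= e; exact: hinj.
    have : Ordinal (ltn_pmod (phi x + (v - j)) k0) \in f @: A by rewrite fsurj inE.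
    case/imsetP => a aA /(congr1 val) /= ht.
    have aS : a \in nzsquares F by apply: (subsetP hsub).
    have av := h1 _ aS; have xv := h1 _ xS.
    have [gS pg] := psiP (phi x + (v - phi a)) v0 hphi.
    exists (blk A (psi v phi (phi x + (v - phi a)))).
      apply/imsetP; eexists; last by reflexivity.
      rewrite inE gS /= pg (modn_dvdm _ hk).
      rewrite -(modn_small jk) -(eqn_modDr (phi a)).
      apply/eqP.
      have -> : (phi x + (v - phi a) + phi a = phi x + v)%N by lia.
      symmetry; rewrite -modnDmr -ht modnDmr; congr (_ %% _)%N; lia.
    apply/imsetP; exists a => //.
    apply: h3 => //; first exact: S_mul.
    rewrite h2 // pg modnDmr.
    have -> : (phi a + (phi x + (v - phi a)) = phi x + v)%N by lia.
    by rewrite modnDr modn_small.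
  + apply/trivIsetP => b1 b2 /imsetP[g1]; rewrite inE => /andP[g1S /eqP hg1] ->.
    move=> /imsetP[g2]; rewrite inE => /andP[g2S /eqP hg2] -> ne.
    rewrite -setI_eq0; apply/eqP/setP => x; rewrite in_setI in_set0.
    apply/negP => /andP[/imsetP[a1 a1A e1] /imsetP[a2 a2A e2]].
    have a1S : a1 \in nzsquares F by apply: (subsetP hsub).
    have a2S : a2 \in nzsquares F by apply: (subsetP hsub).
    have ex : phi (a1 * g1) = phi (a2 * g2) by rewrite -e1 -e2.
    rewrite !h2 // in ex.
    have := congr1 (modn^~ k) ex; rewrite /= !(modn_dvdm _ hk) => exk.
    have e3 : ((phi a1 + phi g1) %% k = (phi a2 + phi g1) %% k)%N.
      by rewrite exk -modnDmr hg2 -hg1 modnDmr.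
    have /eqP := e3; rewrite eqn_modDr => /eqP e4.
    have ea := hinj _ _ a1A a2A e4; subst a2.
    have : g1 = g2 by apply: (mulfI (S_neq0 a1S)); rewrite -e1 -e2.
    by move=> eg; move: ne; rewrite eg eqxx.
  + apply/negP => /imsetP[g]; rewrite inE => /andP[gS _] e.
    have [a aA] : exists a, a \in A by apply/card_gt0P.
    have : a * g \in blk A g by apply/imsetP; exists a.
    by rewrite -e in_set0.
- by move=> b /imsetP[g]; rewrite inE => /andP[gS _] ->; rewrite blk_card // S_neq0.
- by move=> b /imsetP[g _ ->]; rewrite blk_sum.
Qed.

Lemma zdiff_eq (v a b c d : nat) : (b <= v)%N -> (d <= v)%N ->
  ((a + d) %% v = (c + b) %% v)%N -> zdiff v a b = zdiff v c d.
Proof.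
move=> bv dv e; rewrite /zdiff; apply/eqP; rewrite -(eqn_modDr (b + d)).
have -> : (a + (v - b) + (b + d) = (a + d) + v)%N by lia.
have -> : (c + (v - d) + (b + d) = (c + b) + v)%N by lia.
by rewrite eqn_modDr e.
Qed.

Lemma key (F : finFieldType) v (phi : F -> nat) n (B : 'I_n -> {set F}) :
  sq_iso v phi -> heffter_diff_packing v phi B ->
  forall i1 i2 g1 g2 x y, g1 \in nzsquares F -> g2 \in nzsquares F -> x != y ->
  x \in blk (B i1) g1 -> y \in blk (B i1) g1 ->
  x \in blk (B i2) g2 -> y \in blk (B i2) g2 -> i1 = i2 /\ g1 = g2.
Proof.
move=> [h1 h2 h3 h4] [hsub hH1 hH2 hH3] i1 i2 g1 g2 x y g1S g2S xy.
move=> /imsetP[a1 a1B ex1] /imsetP[b1 b1B ey1] /imsetP[a2 a2B ex2] /imsetP[b2 b2B ey2].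
have S1 := subsetP (hsub i1); have S2 := subsetP (hsub i2).
have a1S := S1 _ a1B; have b1S := S1 _ b1B; have a2S := S2 _ a2B; have b2S := S2 _ b2B.
have ab1 : a1 != b1 by apply: contraNneq xy => e; rewrite ex1 ey1 e.
have ab2 : a2 != b2 by apply: contraNneq xy => e; rewrite ex2 ey2 e.
have g0 : g1 * g2 != 0 by rewrite mulf_neq0 // S_neq0.
have em : a1 * b2 = a2 * b1.
  apply: (mulIf g0).
  transitivity ((a1 * g1) * (b2 * g2)); first by ring.
  rewrite -ex1 -ey2 ex2 ey1; ring.
have ep : phi (a1 * b2) = phi (a2 * b1) by rewrite em.
rewrite !h2 // in ep.
have ez := zdiff_eq (ltnW (h1 _ b1S)) (ltnW (h1 _ b2S)) ep.
have [ei ea eb] := hH1 _ _ _ _ _ _ a1B b1B ab1 a2B b2B ab2 ez.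
split => //; move: ex2; rewrite ex1 ea; exact: (mulfI (S_neq0 a2S)).
Qed.

Lemma count_tag n (B : 'I_n -> nat) (s : nat) :
  #|[set t : {i : 'I_n & 'I_(B i)} | B (tag t) == s]| = (\sum_(i < n | B i == s) B i)%N.
Proof.
rewrite -sum1_card.
rewrite (eq_bigl (fun t : {i : 'I_n & 'I_(B i)} => (B (tag t) == s) && true)); last first.
  by move=> t; rewrite inE andbT.
rewrite -(sig_big_dep (fun i => B i == s) (fun i (_ : 'I_(B i)) => true) (fun i _ => 1%N)) /=.
by apply: eq_bigr => i _; rewrite sum1_card card_ord.
Qed.

Lemma cardT n (B : 'I_n -> nat) :
  #|{: {i : 'I_n & 'I_(B i)}}| = (\sum_(i < n) B i)%N.
Proof.
rewrite card_tagged sumnE big_map big_enum /=; apply: eq_bigr => i _; by rewrite card_ord.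
Qed.

Definition Eidx n (B : 'I_n -> nat) (c : 'I_(\sum_(i < n) B i)) : {i : 'I_n & 'I_(B i)} :=
  enum_val (cast_ord (esym (cardT B)) c).

Lemma Eidx_inj n (B : 'I_n -> nat) : injective (@Eidx n B).
Proof. by move=> c1 c2 /enum_val_inj /cast_ord_inj. Qed.

Lemma Eidx_surj n (B : 'I_n -> nat) t : exists c, @Eidx n B c = t.
Proof.
exists (cast_ord (cardT B) (enum_rank t)); by rewrite /Eidx cast_ordK enum_rankK.
Qed.

Lemma count_c n (B : 'I_n -> nat) (s : nat) :
  #|[set c | B (tag (@Eidx n B c)) == s]| = (\sum_(i < n | B i == s) B i)%N.
Proof.
rewrite -count_tag -(card_imset _ (@Eidx_inj n B)).
apply: eq_card => t; rewrite inE; apply/imsetP/idP => [[c]|h].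
  by rewrite inE => /eqP <- ->.
have [c ec] := Eidx_surj t; exists c => //; by rewrite inE ec.
Qed.

Theorem theorem4p3 (F : finFieldType) (v : nat) (hq : #|F| = (2 * v + 1)%N)
    (hv : odd v) (phi : F -> nat) (hphi : sq_iso v phi)
    (n : nat) (B : 'I_n -> {set F})
    (hB : heffter_diff_packing v phi B) :
  (exists (P : 'I_(\sum_(i < n) #|B i|) -> {set {set F}})
          (K : 'I_(\sum_(i < n) #|B i|) -> nat),
     heffter_space (nzsquares F) P K /\
     (forall s : nat,
        #|[set c | K c == s]| = (\sum_(i < n | #|B i| == s) #|B i|)%N)) /\
  ((forall i, has_distinct_partial_sums (B i)) ->
   exists (P : 'I_(\sum_(i < n) #|B i|) -> {set {set F}})
          (K : 'I_(\sum_(i < n) #|B i|) -> nat),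
     [/\ heffter_space (nzsquares F) P K,
         (forall s : nat,
            #|[set c | K c == s]| = (\sum_(i < n | #|B i| == s) #|B i|)%N) &
         (forall c b, b \in P c -> has_distinct_partial_sums b)]).
Proof.
have [hsub hH1 hH2 hH3] := hB.
pose E := @Eidx n (fun i => #|B i|).
pose P c := cls phi (B (tag (E c))) (tagged (E c)).
pose K c := #|B (tag (E c))|.
have hsp : heffter_space (nzsquares F) P K.
  split; first exact: halfset hq hv hphi.
  - move=> c; apply: cls_system; [exact: hv | exact: hphi | exact: hsub | exact: (hH2 _).1 | exact: (hH2 _).2 | exact: hH3 | exact: ltn_ord].
  - move=> c1 c2 b1 b2 x y /imsetP[g1]; rewrite inE => /andP[g1S /eqP e1] ->.
    move=> /imsetP[g2]; rewrite inE => /andP[g2S /eqP e2] -> xy xb1 yb1 xb2 yb2.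
    have [ei eg] := key hphi hB g1S g2S xy xb1 yb1 xb2 yb2.
    have eE : E c1 = E c2.
      move: e1 e2; rewrite eg; move: (E c1) (E c2) ei => [i1 j1] [i2 j2] /= ei.
      subst i2 => e1 e2; congr (Tagged _ _); apply: val_inj; rewrite /= -e1 -e2 //.
    split; first exact: (Eidx_inj eE).
    by rewrite eE eg.
have hcnt : forall s : nat,
    #|[set c | K c == s]| = (\sum_(i < n | #|B i| == s) #|B i|)%N.
  by move=> s; exact: (count_c (fun i => #|B i|) s).
split; first by exists P, K.
move=> hps; exists P, K; split => // c b /imsetP[g]; rewrite inE => /andP[gS _] ->.
by apply: blk_partial; [exact: S_neq0 | exact: hps].
Qed.
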